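(* Let $\{X_k(m): m\in\mathbb{R}_+,\ k\in\mathbb{N}\}$ be a family of integrable real random variables on a probability space $(\Omega,\mathcal F,\mathbb P)$ that are independent in $k$. Assume: (C) $\mathbb{E}[X_k(m)]=0$ for all $m\in\mathbb{R}_+$, $k\in\mathbb{N}$; (W1) for every $\varepsilon>0$, $\lim_{m\to\infty}\sup_k \mathbb{P}(|X_k(m)|>\varepsilon)=0$; (W2) $\lim_{A\to\infty}\sup_{k,m}\mathbb{E}\big[|X_k(m)|\mathbf 1_{\{|X_k(m)|>A\}}\big]=0$. Then for every sequence $\mathbf m=(m_k)_{k\in\mathbb N}$ of positive reals with $\sum_{k}m_k=\infty$, setting $M_n=\sum_{k=1}^n m_k$ and $S_n=\sum_{k=1}^n \frac{m_k}{M_n}X_k(m_k)$, we have $\lim_{n\to\infty}\mathbb{P}(|S_n|>\varepsilon)=0$ for every $\varepsilon>0$.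
   Context: $\mathbb{R}_+$ denotes the positive reals. ''Independent in $k$'' means that the families $\{X_k(m): m\in\mathbb{R}_+\}$ for different $k$ are independent. *)

(* Defs.v *)
From HB Require Import structures.
From mathcomp Require Import all_boot all_order all_algebra.
From mathcomp Require Import all_classical all_reals all_analysis.
Set Implicit Arguments. Unset Strict Implicit. Unset Printing Implicit Defensive.
Import Order.TTheory GRing.Theory Num.Theory.
Local Open Scope classical_set_scope.
Local Open Scope ring_scope.

Definition family_sigma d (T : measurableType d) (R : realType)
  (Y : R -> T -> R) : set (set T) :=
  <<s [set E | exists m, 0 < m /\ exists2 B : set R, measurable B & E = Y m @^-1` B] >>.

Definition indep_in_k d (T : measurableType d) (R : realType)
  (P : probability T R) (X : nat -> R -> T -> R) : Prop :=
  forall (s : seq nat) (E : nat -> set T), uniq s ->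
    (forall k, k \in s -> family_sigma (X k) (E k)) ->
    P (\big[setI/setT]_(k <- s) E k) = (\prod_(k <- s) P (E k))%E.

(* Main.v *)
Require Import Defs.
From HB Require Import structures.
From mathcomp Require Import all_boot all_order all_algebra.
From mathcomp Require Import all_classical all_reals all_analysis.
From mathcomp Require Import measurable_realfun.
From mathcomp Require Import lra ring.
Import Order.TTheory GRing.Theory Num.Theory.
Local Open Scope classical_set_scope.
Local Open Scope ring_scope.

Set Implicit Arguments. Unset Strict Implicit. Unset Printing Implicit Defensive.


Section toolkit.
Context d (T : measurableType d) (R : realType) (P : probability T R).

Definition Ex (f : T -> R) : R := fine ('E_P[f]).
Definition pr (A : set T) : R := fine (P A).

Lemma prE A : measurable A -> P A = (pr A)%:E.
Proof.
move=> mA; rewrite /pr fineK// ge0_fin_numE ?measure_ge0//.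
by rewrite (le_lt_trans (probability_le1 P mA)) ?ltry.
Qed.

Lemma pr_ge0 A : 0 <= pr A.
Proof. exact/fine_ge0/measure_ge0. Qed.

Lemma pr_le A B : measurable A -> measurable B -> A `<=` B -> pr A <= pr B.
Proof.
move=> mA mB AB; rewrite -lee_fin -!prE//; by apply: le_measure; rewrite ?inE.
Qed.

Lemma pr_U A B : measurable A -> measurable B -> pr (A `|` B) <= pr A + pr B.
Proof.
move=> mA mB; rewrite -lee_fin EFinD -!prE//; last exact: measurableU.
exact: measureU2.
Qed.

Lemma bnd_L1 (f : T -> R) (M : R) : measurable_fun setT f ->
  (forall x, `|f x| <= M) -> f \in Lfun P 1.
Proof.
move=> mf fM; apply/Lfun1_integrable.
apply: (@le_integrable _ _ _ P _ measurableT _ (EFin \o cst M)).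
- exact/measurable_EFinP.
- move=> x _ /=; rewrite lee_fin (le_trans (fM x))//.
  exact: ler_norm.
- exact/Lfun1_integrable/Lfun_cst.
Qed.

Lemma ExD (f g : T -> R) : f \in Lfun P 1 -> g \in Lfun P 1 ->
  Ex (fun x => f x + g x) = Ex f + Ex g.
Proof.
move=> lf lg; rewrite /Ex.
have -> : (fun x => f x + g x) = f \+ g by [].
rewrite expectationD//.
by rewrite fineD// expectation_fin_num.
Qed.

Lemma ExZ (k : R) (f : T -> R) : f \in Lfun P 1 ->
  Ex (fun x => k * f x) = k * Ex f.
Proof.
move=> lf; rewrite /Ex.
have -> : (fun x => k * f x) = k \o* f by apply: funext => x; rewrite /= mulrC.
rewrite expectationZl//.
by rewrite fineM// expectation_fin_num.
Qed.

Lemma L1D (f g : T -> R) : f \in Lfun P 1 -> g \in Lfun P 1 ->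
  (fun x => f x + g x) \in Lfun P 1.
Proof.
move=> lf lg; suff -> : (fun x => f x + g x) = f + g by exact: rpredD.
by apply: funext => x.
Qed.

Lemma L1Z (k : R) (f : T -> R) : f \in Lfun P 1 ->
  (fun x => k * f x) \in Lfun P 1.
Proof.
move=> lf; suff -> : (fun x => k * f x) = k *: f by exact: rpredZ.
by apply: funext => x.
Qed.

Lemma L1_0 : (fun _ : T => 0 : R) \in Lfun P 1.
Proof. exact: (@Lfun_cst _ _ _ P 0 1). Qed.

Lemma Ex_cst c : Ex (fun _ => c) = c.
Proof. by rewrite /Ex (expectation_cst P c). Qed.

Lemma L1_sum (I : Type) (s : seq I) (F : I -> T -> R) :
  (forall i, F i \in Lfun P 1) -> (fun x => \sum_(i <- s) F i x) \in Lfun P 1.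
Proof.
move=> lF; elim: s => [|i s IH].
  by under eq_fun do rewrite big_nil; exact: L1_0.
by under eq_fun do rewrite big_cons; exact: L1D.
Qed.

Lemma Ex_sum (I : Type) (s : seq I) (F : I -> T -> R) :
  (forall i, F i \in Lfun P 1) ->
  Ex (fun x => \sum_(i <- s) F i x) = \sum_(i <- s) Ex (F i).
Proof.
move=> lF; elim: s => [|i s IH].
  by under eq_fun do rewrite big_nil; rewrite big_nil Ex_cst.
under eq_fun do rewrite big_cons; rewrite big_cons ExD ?IH//.
exact: L1_sum.
Qed.

Lemma L1_sum_in (I : eqType) (s : seq I) (F : I -> T -> R) :
  (forall i, i \in s -> F i \in Lfun P 1) -> (fun x => \sum_(i <- s) F i x) \in Lfun P 1.
Proof.
elim: s => [|i s IH] lF.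
  by under eq_fun do rewrite big_nil; exact: L1_0.
under eq_fun do rewrite big_cons; apply: L1D; first by apply: lF; rewrite mem_head.
by apply: IH => j js; apply: lF; rewrite inE js orbT.
Qed.

Lemma Ex_sum_in (I : eqType) (s : seq I) (F : I -> T -> R) :
  (forall i, i \in s -> F i \in Lfun P 1) ->
  Ex (fun x => \sum_(i <- s) F i x) = \sum_(i <- s) Ex (F i).
Proof.
elim: s => [|i s IH] lF.
  by under eq_fun do rewrite big_nil; rewrite big_nil Ex_cst.
have lF' : forall j, j \in s -> F j \in Lfun P 1.
  by move=> j js; apply: lF; rewrite inE js orbT.
under eq_fun do rewrite big_cons; rewrite big_cons ExD ?IH//.
  by apply: lF; rewrite mem_head.
exact: L1_sum_in.
Qed.

Lemma Ex_ge0 (f : T -> R) : (forall x, 0 <= f x) -> 0 <= Ex f.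
Proof. by move=> f0; apply/fine_ge0/expectation_ge0. Qed.

Lemma L1N (f : T -> R) : f \in Lfun P 1 -> (fun x => - f x) \in Lfun P 1.
Proof.
move=> lf; suff -> : (fun x => - f x) = (fun x => (-1) * f x) by exact: L1Z.
by apply: funext => x; rewrite mulN1r.
Qed.

Lemma Ex_le (f g : T -> R) : f \in Lfun P 1 -> g \in Lfun P 1 ->
  (forall x, f x <= g x) -> Ex f <= Ex g.
Proof.
move=> lf lg fg.
have : 0 <= Ex (fun x => g x + (-1) * f x).
  by apply: Ex_ge0 => x; rewrite mulN1r subr_ge0.
by rewrite ExD ?ExZ// ?L1Z// mulN1r subr_ge0.
Qed.

Lemma Ex_indic (A : set T) : measurable A -> Ex (\1_A) = pr A.
Proof. by move=> mA; rewrite /Ex expectation_indic. Qed.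

Lemma L1_abs (f : T -> R) : f \in Lfun P 1 -> (fun x => `|f x|) \in Lfun P 1.
Proof. exact: Lfun_norm. Qed.

Lemma Ex_abs (f : T -> R) : f \in Lfun P 1 -> `|Ex f| <= Ex (fun x => `|f x|).
Proof.
move=> lf; rewrite ler_norml; apply/andP; split.
  rewrite -(mulN1r (Ex _)) -ExZ ?L1_abs//; apply: Ex_le => //.
    by apply: L1Z; exact: L1_abs.
  by move=> x; rewrite mulN1r lerNl -normrN ler_norm.
by apply: Ex_le => //; [exact: L1_abs | move=> x; exact: ler_norm].
Qed.

Lemma L1_mfun (f : T -> R) : f \in Lfun P 1 -> measurable_fun setT f.
Proof. by case/andP => /[!inE]. Qed.

Lemma indic_nle1 (A : set T) x : `|(\1_A x : R)| <= 1.
Proof. by rewrite indicE; case: (x \in A); rewrite ?normr1 ?normr0. Qed.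

Lemma L1_indic (A : set T) : measurable A -> (\1_A : T -> R) \in Lfun P 1.
Proof. by move=> mA; apply: (bnd_L1 (M := 1) (measurable_indic mA)) => x; exact: indic_nle1. Qed.

Lemma L1_le (f g : T -> R) : measurable_fun setT f -> g \in Lfun P 1 ->
  (forall x, `|f x| <= `|g x|) -> f \in Lfun P 1.
Proof.
move=> mf lg fg; apply/Lfun1_integrable.
apply: (@le_integrable _ _ _ P _ measurableT _ (EFin \o g)).
- exact/measurable_EFinP.
- by move=> x _ /=; rewrite lee_fin.
- exact/Lfun1_integrable.
Qed.

Lemma mset_le (f : T -> R) t : measurable_fun setT f -> measurable [set x | t <= f x].
Proof.
move=> mf; have := mf measurableT _ (measurable_itv `[t, +oo[).
by rewrite setTI; congr measurable; apply/seteqP; split => x /=; rewrite in_itv /= andbT.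
Qed.

Lemma mset_lt (f : T -> R) t : measurable_fun setT f -> measurable [set x | t < f x].
Proof.
move=> mf; have := mf measurableT _ (measurable_itv `]t, +oo[).
by rewrite setTI; congr measurable; apply/seteqP; split => x /=; rewrite in_itv /= andbT.
Qed.

Lemma markov' (f : T -> R) (t : R) : f \in Lfun P 1 ->
  (forall x, 0 <= f x) -> 0 < t -> t * pr [set x | t <= f x] <= Ex f.
Proof.
move=> lf f0 t0.
have mS : measurable [set x | t <= f x].
  have := (L1_mfun lf) measurableT _ (measurable_itv `[t, +oo[).
  rewrite setTI; congr measurable; apply/seteqP; split => x /=;
    by rewrite in_itv /= andbT.
rewrite -Ex_indic// -ExZ; last exact: L1_indic.
apply: Ex_le => //; first by apply: L1Z; exact: L1_indic.
move=> x; rewrite indicE; case: (boolP (x \in _)) => [|_]; rewrite ?mulr0//.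
by rewrite inE mulr1.
Qed.

End toolkit.


Section lc.
Context (R : realType).
Definition lc (s : seq (R * set R)) (x : R) : R := \sum_(p <- s) p.1 * \1_(p.2) x.

Lemma measurable_lc s : (forall p, p \in s -> measurable p.2) ->
  measurable_fun setT (lc s).
Proof.
elim: s => [|p s IH] ms.
  by rewrite /lc; under eq_fun do rewrite big_nil; exact: measurable_cst.
rewrite /lc; under eq_fun do rewrite big_cons.
apply: measurable_funD.
  apply: measurable_funM; first exact: measurable_cst.
  by apply: measurable_indic; apply: ms; rewrite mem_head.
by apply: IH => q qs; apply: ms; rewrite inE qs orbT.
Qed.

Lemma lc_bound s x : `|lc s x| <= \sum_(p <- s) `|p.1|.
Proof.
rewrite /lc; apply: (le_trans (ler_norm_sum _ _ _)); apply: ler_sum => p _.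
rewrite normrM -[leRHS]mulr1 ler_wpM2l//.
by rewrite indicE; case: (x \in _); rewrite ?normr1 ?normr0.
Qed.
End lc.

Section indep2.
Context d (T : measurableType d) (R : realType) (P : probability T R).
Variables (Z1 Z2 : T -> R).
Hypotheses (mZ1 : measurable_fun setT Z1) (mZ2 : measurable_fun setT Z2).

Lemma L1_lc (Z : T -> R) s : measurable_fun setT Z ->
  (forall p, p \in s -> measurable p.2) ->
  (fun x => lc s (Z x)) \in Lfun P 1.
Proof.
move=> mZ ms; apply: (bnd_L1 P (M := \sum_(p <- s) `|p.1|)); last by move=> x; exact: lc_bound.
exact: measurableT_comp (measurable_lc ms) mZ.
Qed.

Lemma mpre (Z : T -> R) (B : set R) : measurable_fun setT Z -> measurable B ->
  measurable (Z @^-1` B).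
Proof. by move=> mZ mB; rewrite -[X in measurable X]setTI; exact: mZ. Qed.

Lemma indic_comp (Z : T -> R) (B : set R) x : (\1_B (Z x) : R) = \1_(Z @^-1` B) x.
Proof. by rewrite !indicE. Qed.

Lemma Ex_lc (Z : T -> R) s : measurable_fun setT Z ->
  (forall p, p \in s -> measurable p.2) ->
  Ex P (fun x => lc s (Z x)) = \sum_(p <- s) p.1 * pr P (Z @^-1` p.2).
Proof.
move=> mZ ms; rewrite /lc.
under eq_fun do under eq_bigr do rewrite indic_comp.
rewrite (@Ex_sum_in _ _ _ P _ s (fun p x => p.1 * \1_(Z @^-1` p.2) x)).
  rewrite big_seq [RHS]big_seq; apply: eq_bigr => p ps.
  have mp := mpre mZ (ms p ps).
  by rewrite ExZ ?Ex_indic//; exact: L1_indic.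
by move=> p ps; apply: L1Z; apply: L1_indic; exact: mpre mZ (ms p ps).
Qed.

Hypothesis hind : forall B C, measurable B -> measurable C ->
  P (Z1 @^-1` B `&` Z2 @^-1` C) = (P (Z1 @^-1` B) * P (Z2 @^-1` C))%E.

Lemma pr_indep B C : measurable B -> measurable C ->
  pr P (Z1 @^-1` B `&` Z2 @^-1` C) = pr P (Z1 @^-1` B) * pr P (Z2 @^-1` C).
Proof.
move=> mB mC; rewrite {1}/pr hind// (prE P (mpre mZ1 mB)) (prE P (mpre mZ2 mC)).
by [].
Qed.

Lemma Ex_lc_prod s1 s2 :
  (forall p, p \in s1 -> measurable p.2) ->
  (forall p, p \in s2 -> measurable p.2) ->
  Ex P (fun x => lc s1 (Z1 x) * lc s2 (Z2 x)) =
  Ex P (fun x => lc s1 (Z1 x)) * Ex P (fun x => lc s2 (Z2 x)).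
Proof.
move=> ms1 ms2; rewrite !Ex_lc//.
have E x : lc s1 (Z1 x) * lc s2 (Z2 x) = \sum_(p <- s1) \sum_(q <- s2)
    (p.1 * q.1) * \1_(Z1 @^-1` p.2 `&` Z2 @^-1` q.2) x.
  rewrite /lc big_distrl; apply: eq_bigr => p _; rewrite big_distrr.
  apply: eq_bigr => q _ /=.
  by rewrite !indic_comp indicI /= mulrACA.
under eq_fun do rewrite E.
have mI p q : p \in s1 -> q \in s2 -> measurable (Z1 @^-1` p.2 `&` Z2 @^-1` q.2).
  by move=> ps qs; apply: measurableI; [exact: mpre mZ1 (ms1 p ps)|exact: mpre mZ2 (ms2 q qs)].
rewrite (@Ex_sum_in _ _ _ P _ s1 (fun p x => \sum_(q <- s2)
    (p.1 * q.1) * \1_(Z1 @^-1` p.2 `&` Z2 @^-1` q.2) x)); last first.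
  move=> p ps; apply: L1_sum_in => q qs; apply: L1Z; apply: L1_indic.
  exact: mI.
rewrite big_distrl; apply: eq_big_seq => p ps /=.
rewrite (@Ex_sum_in _ _ _ P _ s2 (fun q x =>
    (p.1 * q.1) * \1_(Z1 @^-1` p.2 `&` Z2 @^-1` q.2) x)); last first.
  by move=> q qs; apply: L1Z; apply: L1_indic; exact: mI.
rewrite big_distrr; apply: eq_big_seq => q qs /=.
rewrite ExZ ?Ex_indic ?pr_indep//; [|exact: ms1|exact: ms2|exact: mI|].
  by rewrite mulrACA.
by apply: L1_indic; exact: mI.
Qed.
End indep2.


Lemma mem_set_itv (R : realType) (i : interval R) (x : R) : (x \in [set` i]) = (x \in i).
Proof. by apply/idP/idP; rewrite in_setE. Qed.

Section stair.
Context (R : realType) (r : R) (N : nat).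
Hypothesis r0 : 0 < r.

Definition cst_a (a : nat) : R := (a%:R - N%:R) * r.
Definition stair : seq (R * set R) :=
  [seq (cst_a a, `[cst_a a, cst_a a + r[%classic) | a <- iota 0 (N.*2)].

Lemma stair_meas p : p \in stair -> measurable p.2.
Proof. by case/mapP => a _ ->; exact: measurable_itv. Qed.

Lemma lc_stair x : lc stair x = \sum_(a <- iota 0 N.*2) cst_a a * \1_(`[cst_a a, cst_a a + r[%classic) x.
Proof. by rewrite /lc big_map. Qed.

Lemma in_stair_itv a x : (x \in (`[cst_a a, cst_a a + r[%classic : set R)) =
   (a%:R <= (x + N%:R * r) / r < a.+1%:R).
Proof.
rewrite mem_set_itv in_itv /= /cst_a ler_pdivlMr// ltr_pdivrMr//.
rewrite -natr1; apply/idP/idP => /andP[h1 h2]; apply/andP; split; lra.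
Qed.

Lemma stair_out x : x < - (N%:R * r) \/ N%:R * r <= x -> lc stair x = 0.
Proof.
move=> hx; rewrite lc_stair big1_seq// => a /andP[_]; rewrite mem_iota add0n => aN.
rewrite indicE in_stair_itv.
suff -> : (a%:R <= (x + N%:R * r) / r < a.+1%:R) = false by rewrite mulr0.
apply/negbTE; rewrite negb_and -!ltNge; apply/orP.
case: hx => hx; [left | right; rewrite -leNgt].
  apply: (lt_le_trans (y := 0)); last exact: ler0n.
  by rewrite ltr_pdivrMr// mul0r; lra.
rewrite ler_pdivlMr//.
have h : (a.+1%:R : R) <= N.*2%:R by rewrite ler_nat.
rewrite -addnn natrD in h.
have := ler_wpM2r (ltW r0) h; lra.
Qed.

Lemma stair_in x : - (N%:R * r) <= x < N%:R * r ->
  let c := lc stair x in c <= x < c + r /\ - (N%:R * r) <= c.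
Proof.
move=> /andP[h1 h2].
have y0 : 0 <= (x + N%:R * r) / r by apply: divr_ge0; [lra | exact: ltW].
set a := Num.Def.trunc ((x + N%:R * r) / r).
have aN : (a < N.*2)%N.
  rewrite truncn_lt_nat// ltr_pdivrMr// -addnn natrD mulrDl ltrD2r//.
have xa : x \in (`[cst_a a, cst_a a + r[%classic : set R).
  by rewrite in_stair_itv -truncn_eq.
have -> : lc stair x = cst_a a.
  rewrite lc_stair (bigD1_seq a) ?iota_uniq ?mem_iota//= big1 ?addr0.
    by rewrite indicE xa mulr1.
  move=> b ba; rewrite indicE.
  suff -> : (x \in (`[cst_a b, cst_a b + r[%classic : set R)) = false by rewrite mulr0.
  by apply/negbTE; rewrite in_stair_itv -truncn_eq// eq_sym.
move: xa; rewrite mem_set_itv in_itv /= => /andP[-> ->]; split => //.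
rewrite /cst_a mulrBl; have : 0 <= a%:R * r by rewrite mulr_ge0// ltW.
lra.
Qed.

Lemma stair_case x : (lc stair x = 0) \/
  (- (N%:R * r) <= x < N%:R * r /\ lc stair x <= x < lc stair x + r /\ - (N%:R * r) <= lc stair x).
Proof.
case: (boolP (- (N%:R * r) <= x < N%:R * r)) => h.
  by right; split => //; exact: stair_in.
left; apply: stair_out; move: h; rewrite negb_and -!ltNge -leNgt.
by case/orP; [left|right].
Qed.

Lemma stair_b1 x : `|lc stair x| <= N%:R * r.
Proof.
have A0 : 0 <= N%:R * r by rewrite mulr_ge0// ltW.
case: (stair_case x) => [->|[/andP[h1 h2] [/andP[h3 h4] h5]]]; first by rewrite normr0.
rewrite ler_norml; apply/andP; split; lra.
Qed.

Lemma stair_b2 x : `|lc stair x| <= `|x| + r.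
Proof.
case: (stair_case x) => [->|[/andP[h1 h2] [/andP[h3 h4] h5]]].
  by rewrite normr0 addr_ge0// ltW.
rewrite ler_norml; apply/andP; split.
  have : -x <= `|x| by rewrite -normrN ler_norm.
  lra.
have := ler_norm x; lra.
Qed.

Lemma stair_b3 x : `|x| < N%:R * r -> `|x - lc stair x| <= r.
Proof.
rewrite ltr_norml => /andP[hx1 hx2].
have [] := stair_in (x := x); first by rewrite (ltW hx1) hx2.
move=> /andP[h3 h4] h5; rewrite ler_norml; apply/andP; split; lra.
Qed.
End stair.


Section main_est.
Context d (T : measurableType d) (R : realType) (P : probability T R).
Context (n : nat) (w : nat -> R) (Z : nat -> T -> R).
Context (w0 : forall k, 0 <= w k) (w1 : \sum_(k < n) w k = 1).
Context (mZ : forall k, measurable_fun setT (Z k)) (lZ : forall k, Z k \in Lfun P 1).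
Context (EZ : forall k, Ex P (Z k) = 0).
Context (hind : forall k l, k != l -> forall B C, measurable B -> measurable C ->
  P (Z k @^-1` B `&` Z l @^-1` C) = (P (Z k @^-1` B) * P (Z l @^-1` C))%E).
Context (r : R) (N : nat) (Bth eta : R) (r0 : 0 < r) (BA : Bth < N%:R * r).
Context (heta : forall k, Ex P (fun x => `|Z k x| * \1_[set y | Bth < `|Z k y|] x) <= eta).

Let A := N%:R * r.
Let g := lc (stair r N).
Let U k x := g (Z k x).
Let V k x := Z k x - U k x.

Lemma mg : measurable_fun setT g.
Proof. by apply: measurable_lc => p; exact: stair_meas. Qed.

Lemma mU k : measurable_fun setT (U k).
Proof. exact: measurableT_comp mg (mZ k). Qed.

Lemma lU k : U k \in Lfun P 1.
Proof. by apply: (bnd_L1 P (mU k)) => x; exact: stair_b1. Qed.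

Lemma lV k : V k \in Lfun P 1.
Proof. by apply: L1D (lZ k) _; apply: L1N; exact: lU. Qed.

Lemma mBt t k : measurable [set y | t < `|Z k y|].
Proof. exact/mset_lt/(measurableT_comp (@normr_measurable R setT) (mZ k)). Qed.

Lemma mB k : measurable [set y | Bth < `|Z k y|].
Proof. exact: mBt. Qed.

Lemma V_bound k x : `|V k x| <= r + `|Z k x| * \1_[set y | Bth < `|Z k y|] x.
Proof.
rewrite /V /U /g.
have [hA|hA] := ltP `|Z k x| A.
  by rewrite (le_trans (stair_b3 r0 hA))// lerDl mulr_ge0.
have -> : \1_[set y | Bth < `|Z k y|] x = 1 :> R.
  by rewrite indicE mem_set//= (lt_le_trans BA hA).
rewrite mulr1; case: (stair_case N r0 (Z k x)) => [->|[_ [/andP[h1 h2] _]]].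
  by rewrite subr0 lerDr ltW.
apply: (le_trans (y := r)); last by rewrite lerDl.
rewrite ler_norml; apply/andP; split; lra.
Qed.

Lemma lZind k : (fun x => `|Z k x| * \1_[set y | Bth < `|Z k y|] x) \in Lfun P 1.
Proof.
apply: (L1_le (g := Z k)) => //.
  apply: measurable_funM; first exact: measurableT_comp (@normr_measurable R setT) (mZ k).
  exact: measurable_indic (mB k).
move=> x; rewrite normrM normr_id -[leRHS]mulr1 ler_wpM2l//.
exact: indic_nle1.
Qed.

Lemma EV_bound k : Ex P (fun x => `|V k x|) <= r + eta.
Proof.
apply: (le_trans (y := Ex P (fun x => r + `|Z k x| * \1_[set y | Bth < `|Z k y|] x))).
  apply: Ex_le; [exact: L1_abs (lV k)| |exact: V_bound].
  apply: L1D; [exact: (@Lfun_cst _ _ _ P r 1)|exact: lZind].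
rewrite ExD ?Ex_cst ?lerD2l//; [exact: (@Lfun_cst _ _ _ P r 1)|exact: lZind].
Qed.

Lemma EU_bound k : `|Ex P (U k)| <= r + eta.
Proof.
have : Ex P (Z k) = Ex P (fun x => U k x + V k x).
  by congr Ex; apply: funext => x; rewrite /V addrC subrK.
rewrite ExD ?EZ; [|exact: lU|exact: lV].
move/eqP; rewrite eq_sym addr_eq0 => /eqP ->; rewrite normrN.
apply: le_trans (EV_bound k); exact: Ex_abs (lV k).
Qed.

Let W x := \sum_(k < n) w k * V k x.
Let Y x := \sum_(k < n) w k * U k x.

Lemma lW : W \in Lfun P 1.
Proof. by apply: L1_sum => k; apply: L1Z; exact: lV. Qed.

Lemma W_bound (a : R) : 0 < a -> pr P [set x | a <= `|W x|] <= (r + eta) / a.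
Proof.
move=> a0; rewrite ler_pdivlMr// mulrC.
apply: (le_trans (markov' (L1_abs lW) (fun x => normr_ge0 _) a0)).
apply: (le_trans (y := Ex P (fun x => \sum_(k < n) w k * `|V k x|))).
  apply: Ex_le; [exact: L1_abs lW| |].
    by apply: L1_sum => k; apply: L1Z; exact: L1_abs (lV k).
  move=> x; rewrite /W (le_trans (ler_norm_sum _ _ _))//.
  by apply: ler_sum => k _; rewrite normrM ger0_norm.
rewrite Ex_sum; last by move=> k; apply: L1Z; exact: L1_abs (lV k).
apply: (le_trans (y := \sum_(k < n) w k * (r + eta))).
  apply: ler_sum => k _; rewrite ExZ; last exact: L1_abs (lV k).
  by rewrite ler_wpM2l// EV_bound.
by rewrite -big_distrl /= w1 mul1r.
Qed.

Lemma Y_norm x : `|Y x| <= A.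
Proof.
rewrite /Y (le_trans (ler_norm_sum _ _ _))//.
apply: (le_trans (y := \sum_(k < n) w k * A)).
  by apply: ler_sum => k _; rewrite normrM ger0_norm// ler_wpM2l// stair_b1.
by rewrite -big_distrl /= w1 mul1r.
Qed.

Lemma lY : Y \in Lfun P 1.
Proof. by apply: L1_sum => k; apply: L1Z; exact: lU. Qed.

Lemma lY2 : (fun x => Y x ^+ 2) \in Lfun P 1.
Proof.
apply: (bnd_L1 P (M := A ^+ 2)).
  by apply: measurable_funM; exact: L1_mfun lY.
move=> x; rewrite normrX lerXn2r ?nnegrE//; last exact: Y_norm.
by rewrite mulr_ge0// ltW.
Qed.

Lemma Y_bound (a : R) : 0 < a -> pr P [set x | a <= `|Y x|] <= Ex P (fun x => Y x ^+ 2) / a ^+ 2.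
Proof.
move=> a0; rewrite ler_pdivlMr ?exprn_gt0// mulrC.
have -> : [set x | a <= `|Y x|] = [set x | a ^+ 2 <= Y x ^+ 2].
  apply: eq_set => x; rewrite -(real_normK (num_real (Y x))) ler_sqr// nnegrE ltW//.
exact: (markov' lY2 (fun x => sqr_ge0 _) (exprn_gt0 2 a0)).
Qed.

Lemma lUU k l : (fun x => U k x * U l x) \in Lfun P 1.
Proof.
apply: (bnd_L1 P (M := A * A)); first exact: measurable_funM (mU k) (mU l).
move=> x; rewrite normrM ler_pM//; exact: stair_b1.
Qed.

Lemma EUU k l : k != l -> Ex P (fun x => U k x * U l x) = Ex P (U k) * Ex P (U l).
Proof.
move=> kl; rewrite /U /g.
apply: (Ex_lc_prod (mZ k) (mZ l) (hind kl)) => p; exact: stair_meas.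
Qed.

Lemma Y2_bound : Ex P (fun x => Y x ^+ 2) <=
  (r + eta) ^+ 2 + \sum_(k < n) w k ^+ 2 * Ex P (fun x => U k x ^+ 2).
Proof.
set mu := fun k => Ex P (U k).
set nu := fun k => Ex P (fun x => U k x ^+ 2).
have E1 : Ex P (fun x => Y x ^+ 2) = \sum_(k < n) \sum_(l < n)
    (w k * w l) * Ex P (fun x => U k x * U l x).
  have -> : (fun x => Y x ^+ 2) = (fun x => \sum_(k < n) \sum_(l < n)
      (w k * w l) * (U k x * U l x)).
    apply: funext => x; rewrite /Y expr2 mulr_suml; apply: eq_bigr => k _.
    rewrite mulr_sumr; apply: eq_bigr => l _; lra.
  rewrite Ex_sum; last by move=> k; apply: L1_sum => l; apply: L1Z; exact: lUU.
  apply: eq_bigr => k _; rewrite Ex_sum; last by move=> l; apply: L1Z; exact: lUU.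
  by apply: eq_bigr => l _; rewrite ExZ//; exact: lUU.
have E2 : forall k : 'I_n, \sum_(l < n) (w k * w l) * Ex P (fun x => U k x * U l x) =
    \sum_(l < n) (w k * mu k) * (w l * mu l) + w k ^+ 2 * (nu k - mu k ^+ 2).
  move=> k; rewrite (bigD1 k)//= [X in _ = X + _](bigD1 k)//=.
  have -> : \sum_(l < n | l != k) (w k * w l) * Ex P (fun x => U k x * U l x) =
      \sum_(l < n | l != k) (w k * mu k) * (w l * mu l).
    apply: eq_bigr => l lk; rewrite EUU; first by rewrite /mu; lra.
    by rewrite eq_sym.
  have -> : Ex P (fun x => U k x * U k x) = nu k.
    by rewrite /nu; congr Ex; apply: funext => x; rewrite expr2.
  rewrite /mu /nu; lra.
rewrite E1 (eq_bigr _ (fun k _ => E2 k)) big_split /=.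
under eq_bigr do rewrite -big_distrr /=.
rewrite -big_distrl /= -expr2 lerD//.
  have h : `|\sum_(k < n) w k * mu k| <= r + eta.
    rewrite (le_trans (ler_norm_sum _ _ _))//.
    apply: (le_trans (y := \sum_(k < n) w k * (r + eta))).
      by apply: ler_sum => k _; rewrite normrM ger0_norm// ler_wpM2l// EU_bound.
    by rewrite -big_distrl /= w1 mul1r.
  rewrite -real_normK ?num_real// lerXn2r ?nnegrE//.
  exact: le_trans h.
apply: ler_sum => k _; rewrite ler_wpM2l ?exprn_ge0// lerBlDr lerDl.
exact: sqr_ge0.
Qed.

Lemma lU2 k : (fun x => U k x ^+ 2) \in Lfun P 1.
Proof. by have := lUU k k; congr (_ \in _); apply: funext => x; rewrite expr2. Qed.

Lemma nu1 k : Ex P (fun x => U k x ^+ 2) <= A ^+ 2.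
Proof.
rewrite -[leRHS](Ex_cst P); apply: Ex_le; [exact: lU2|exact: (@Lfun_cst _ _ _ P _ 1)|].
move=> x; rewrite -real_normK ?num_real// lerXn2r ?nnegrE ?stair_b1//.
by rewrite mulr_ge0// ltW.
Qed.

Lemma nu2 k : Ex P (fun x => U k x ^+ 2) <=
  4 * r ^+ 2 + A ^+ 2 * pr P [set y | r < `|Z k y|].
Proof.
rewrite -Ex_indic; last exact: mBt.
rewrite -ExZ; last exact: L1_indic (mBt _ _).
rewrite -[X in _ <= X + _](Ex_cst P) -ExD; last 2 first.
- exact: (@Lfun_cst _ _ _ P _ 1).
- by apply: L1Z; exact: L1_indic (mBt _ _).
apply: Ex_le; [exact: lU2| |].
  apply: L1D; first exact: (@Lfun_cst _ _ _ P _ 1).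
  by apply: L1Z; exact: L1_indic (mBt _ _).
move=> x; have A0 : 0 <= A by rewrite mulr_ge0// ltW.
have hU1 := stair_b1 N r0 (Z k x).
have hU2 := stair_b2 N r0 (Z k x).
rewrite -/g -/(U k x) in hU1 hU2.
have hU0 := normr_ge0 (U k x).
rewrite -(real_normK (num_real (U k x))).
rewrite indicE; case: (boolP (x \in _)) => hx; rewrite ?mulr1 ?mulr0.
  have : `|U k x| ^+ 2 <= A ^+ 2 by rewrite lerXn2r ?nnegrE.
  have : 0 <= r ^+ 2 by exact: sqr_ge0.
  lra.
have hZ : `|Z k x| <= r.
  by rewrite leNgt; apply: contra hx => h; rewrite mem_set.
have h2 : `|U k x| <= 2 * r by lra.
have : `|U k x| ^+ 2 <= (2 * r) ^+ 2 by rewrite lerXn2r ?nnegrE// mulr_ge0// ltW.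
have -> : (2 * r) ^+ 2 = 4 * r ^+ 2 by rewrite !expr2; ring.
lra.
Qed.

Let S x := \sum_(k < n) w k * Z k x.

Lemma main_bound (a : R) : 0 < a ->
  pr P [set x | 2 * a < `|S x|] <=
  ((r + eta) ^+ 2 + \sum_(k < n) w k ^+ 2 * Ex P (fun x => U k x ^+ 2)) / a ^+ 2 +
  (r + eta) / a.
Proof.
move=> a0.
have mS : measurable_fun setT S.
  by apply: L1_mfun; apply: L1_sum => k; apply: L1Z; exact: lZ.
have mY' := mset_le a (measurableT_comp (@normr_measurable R setT) (L1_mfun lY)).
have mW' := mset_le a (measurableT_comp (@normr_measurable R setT) (L1_mfun lW)).
apply: (le_trans (y := pr P ([set x | a <= `|Y x|] `|` [set x | a <= `|W x|]))).
  apply: pr_le => //; first exact/mset_lt/(measurableT_comp (@normr_measurable R setT) mS).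
    exact: measurableU.
  move=> x /= h; case: (leP a `|Y x|) => h1; first by left.
  case: (leP a `|W x|) => h2; first by right.
  exfalso; move: h.
  have -> : S x = Y x + W x.
    by rewrite /S /Y /W -big_split /=; apply: eq_bigr => k _; rewrite /V; lra.
  have := ler_normD (Y x) (W x); move=> h3 h4; lra.
apply: (le_trans (pr_U _ mY' mW')); apply: lerD.
  apply: (le_trans (Y_bound a0)); rewrite ler_pM2r ?invr_gt0 ?exprn_gt0//.
  exact: Y2_bound.
exact: W_bound.
Qed.

End main_est.


Lemma sum_split (R : realType) (n : nat) (m nu p : nat -> R) (Mn L th A2 c : R) :
  0 < Mn -> (forall k, 0 < m k) -> \sum_(k < n) m k = Mn ->
  (forall k, 0 <= nu k <= A2) -> (forall k, nu k <= c + A2 * p k) ->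
  (forall k, (k < n)%N -> L <= m k -> p k <= th) -> 0 <= A2 -> 0 <= L ->
  0 <= c + A2 * th ->
  \sum_(k < n) (m k / Mn) ^+ 2 * nu k <= A2 * (L / Mn) + (c + A2 * th).
Proof.
move=> Mn0 m0 sM hnu1 hnu2 hp A20 L0 c0.
have w0 k : 0 <= m k / Mn by rewrite divr_ge0// ltW.
have w1 : \sum_(k < n) m k / Mn = 1 by rewrite -mulr_suml sM divff// gt_eqF.
have wle1 (k : 'I_n) : m k / Mn <= 1.
  rewrite -w1 (bigD1 k)//= lerDl; apply: sumr_ge0 => i _; exact: w0.
have LM0 : 0 <= A2 * (L / Mn) by rewrite mulr_ge0// divr_ge0// ltW.
rewrite -[leRHS]mul1r -w1 mulr_suml; apply: ler_sum => k _.
have := hnu1 k => /andP[n0 n1].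
rewrite expr2 -mulrA ler_wpM2l//.
have [mL|Lm] := ltP (m k) L.
  have wL : m k / Mn <= L / Mn by rewrite ler_pM2r ?invr_gt0// ltW.
  apply: (le_trans (y := L / Mn * A2)); first exact: ler_pM (w0 k) n0 wL n1.
  by rewrite mulrC lerDl.
apply: (le_trans (y := nu k)).
  by rewrite -[leRHS]mul1r ler_wpM2r.
apply: (le_trans (hnu2 k)).
have := ler_wpM2l A20 (hp k (ltn_ord k) Lm); lra.
Qed.

Lemma ecvg0_le (R : realType) (I : Type) (F : set_system I) (FF : Filter F)
  (u : I -> \bar R) : u x @[x --> F] --> 0%E ->
  forall e : R, 0 < e -> \forall x \near F, (u x <= e%:E)%E.
Proof.
move=> /fine_cvgP[finu cu] e e0.
have hh := cvgr_dist_le _ _ cu e e0.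
have key : forall x, u x \is a fin_num -> `|0 - (fine \o u) x| <= e -> (u x <= e%:E)%E.
  move=> x h1 h2; rewrite -(fineK h1) lee_fin; move: h2; rewrite sub0r normrN /=.
  by move/(le_trans (ler_norm _)).
exact: (@filterS2 _ _ _ _ _ _ key finu (hh FF)).
Qed.

Lemma pr_cvg0 d (T : measurableType d) (R : realType) (P : probability T R)
  (S : nat -> set T) : (forall n, measurable (S n)) ->
  (forall e : R, 0 < e -> \forall n \near \oo, pr P (S n) <= e) ->
  P (S n) @[n --> \oo] --> 0%E.
Proof.
move=> mS h; apply/fine_cvgP; split.
  apply: nearW => n; rewrite (prE P (mS n)); exact: fin_numE.
apply/cvgrPdist_le => e e0; move: (h e e0); apply: filterS => n hn.
rewrite /= sub0r normrN ger0_norm; first exact: hn.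
exact: pr_ge0.
Qed.

Unset Implicit Arguments. Set Strict Implicit. Set Printing Implicit Defensive.

Theorem theorem2p1 (d : measure_display) (T : measurableType d) (R : realType)
  (P : probability T R) (X : nat -> R -> {RV P >-> R}) :
  (forall k m, 0 < m -> P.-integrable setT (EFin \o X k m)) ->
  indep_in_k P (fun k m => X k m : T -> R) ->
  (* (C) *)
  (forall k m, 0 < m -> ('E_P[X k m] = 0)%E) ->
  (* (W1) *)
  (forall eps : R, 0 < eps ->
     ereal_sup [set P [set w | eps < `|X k m w|] | k in [set: nat]]
       @[m --> +oo] --> 0%E) ->
  (* (W2) *)
  (ereal_sup [set (\int[P]_(w in [set w | (A < `|X km.1 km.2 w|)%R]) (`|X km.1 km.2 w|)%:E)%E
               | km in [set km : nat * R | 0 < km.2]]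
     @[A --> +oo%R] --> 0%E) ->
  forall mseq : nat -> R, (forall k, 0 < mseq k) ->
    (fun n => \sum_(k < n) mseq k) @ \oo --> +oo ->
    forall eps : R, 0 < eps ->
      P [set w | eps < `|\sum_(k < n) (mseq k / \sum_(j < n) mseq j) * X k (mseq k) w|]
        @[n --> \oo] --> 0%E.
Proof.
move=> hint hind hC hW1 hW2 mseq mpos hM eps eps0.
pose Z k := (X k (mseq k) : T -> R).
have mZ k : measurable_fun setT (Z k) by exact: measurable_funPT.
have lZ k : Z k \in Lfun P 1 by apply/Lfun1_integrable; exact: hint.
have EZ k : Ex P (Z k) = 0 by rewrite /Ex /Z hC.
have hind2 : forall k l, k != l -> forall B C, measurable B -> measurable C ->
    P (Z k @^-1` B `&` Z l @^-1` C) = (P (Z k @^-1` B) * P (Z l @^-1` C))%E.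
  move=> k l kl B C mB mC.
  have := hind [:: k; l] (fun j => if j == k then Z k @^-1` B else Z l @^-1` C).
  rewrite !big_cons !big_nil eqxx eq_sym (negbTE kl) setIT mule1; apply.
    by rewrite /= inE kl.
  move=> j; rewrite !inE => /orP[/eqP->|/eqP->]; rewrite ?eqxx ?(negbTE _).
    apply: sub_gen_smallest; exists (mseq k); split; first exact: mpos.
    by exists B.
  rewrite eq_sym (negbTE kl).
  apply: sub_gen_smallest; exists (mseq l); split; first exact: mpos.
  by exists C.
have mSn n : measurable [set w | eps < `|\sum_(k < n) (mseq k / \sum_(j < n) mseq j) * X k (mseq k) w|].
  apply: mset_lt; apply: measurableT_comp (@normr_measurable R setT) _.
  apply: (@L1_mfun _ _ _ P); apply: L1_sum => k; apply: L1Z; exact: lZ k.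
apply: pr_cvg0 => // δ δ0.
pose a := eps / 2.
have a0 : 0 < a by rewrite divr_gt0.
pose t := Order.min 1 (δ / 20).
have t0 : 0 < t by rewrite lt_min ltr01 divr_gt0.
have t1 : t <= 1 by rewrite ge_min lexx.
have t2 : t <= δ / 20 by rewrite ge_min lexx orbT.
pose r := a * t.
have r0 : 0 < r by rewrite mulr_gt0.
have [M0 [_ HM0]] := ecvg0_le _ hW2 r0.
pose Bth := M0 + 1.
have heta k : Ex P (fun x => `|Z k x| * \1_[set y | Bth < `|Z k y|] x) <= r.
  have HB := HM0 Bth ltac:(by rewrite ltrDl ltr01).
  have hI : (\int[P]_(w in [set w | (Bth < `|X k (mseq k) w|)%R]) (`|X k (mseq k) w|)%:E <= r%:E)%E.
    apply: (le_trans _ HB); apply: ereal_sup_ubound; exists (k, mseq k) => //=.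
  have I0 : (0 <= \int[P]_(w in [set w | (Bth < `|X k (mseq k) w|)%R]) (`|X k (mseq k) w|)%:E)%E.
    by apply: integral_ge0 => x _; rewrite lee_fin.
  rewrite integral_mkcond in hI I0.
  have -> : Ex P (fun x => `|Z k x| * \1_[set y | Bth < `|Z k y|] x) =
      fine (\int[P]_w (((fun w => (`|X k (mseq k) w|)%:E) \_ [set w | (Bth < `|X k (mseq k) w|)%R]) w))%E.
    rewrite /Ex unlock; congr fine; apply: eq_integral => x _.
    rewrite /patch indicE /Z; case: ifP => _; by rewrite ?mulr1 ?mulr0.
  move: hI I0; set I := (\int[P]_w _)%E => hI I0.
  by rewrite -lee_fin fineK// ge0_fin_numE// (le_lt_trans hI) ?ltry.
pose N := (Num.Def.trunc (Bth / r)).+1.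
have BA : Bth < N%:R * r by rewrite -ltr_pdivrMr//; exact: truncnS_gt.
pose A := N%:R * r.
have A0 : 0 < A by rewrite mulr_gt0// ltr0n.
pose th := δ * a ^+ 2 / (4 * A ^+ 2).
have th0 : 0 < th by rewrite !mulr_gt0 ?exprn_gt0 ?invr_gt0 ?mulr_gt0 ?exprn_gt0.
have [M1 [_ HM1]] := ecvg0_le _ (hW1 r r0) th0.
pose L := `|M1| + 1.
have L0 : 0 <= L by rewrite addr_ge0.
have hp k : L <= mseq k -> pr P [set y | r < `|Z k y|] <= th.
  move=> hk; have hM1 : M1 < mseq k.
    by apply: (le_lt_trans (ler_norm M1)); apply: (lt_le_trans _ hk); rewrite ltrDl.
  have := HM1 _ hM1.
  have hP : (P [set w | (r < `|X k (mseq k) w|)%R] <=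
      ereal_sup [set P [set w | (r < `|X k0 (mseq k) w|)%R] | k0 in [set: nat]])%E.
    by apply: ereal_sup_ubound; exists k.
  move=> /(le_trans hP); rewrite prE ?lee_fin//.
  exact: (mBt mZ r k).
pose Kb := Order.max 1 (4 * A ^+ 2 * L / (δ * a ^+ 2)).
have /cvgryPge hK := hM.
move: (hK Kb); apply: filterS => n hn.
set Mn := \sum_(j < n) mseq j in hn *.
have Mn1 : 1 <= Mn by apply: le_trans hn; rewrite le_max lexx.
have MnK : 4 * A ^+ 2 * L / (δ * a ^+ 2) <= Mn by apply: le_trans hn; rewrite le_max lexx orbT.
have Mn0 : 0 < Mn by apply: lt_le_trans Mn1.
pose w k := mseq k / Mn.
have w0 k : 0 <= w k by rewrite divr_ge0// ltW.
have w1 : \sum_(k < n) w k = 1 by rewrite -mulr_suml divff// gt_eqF.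
have hb := main_bound w0 w1 mZ lZ EZ hind2 r0 BA heta a0.
have e2 : 2 * a = eps by rewrite /a mulrC divfK.
rewrite e2 in hb.
apply: (le_trans hb) => /=.
have hs : \sum_(k < n) w k ^+ 2 * Ex P (fun x => lc (stair r N) (Z k x) ^+ 2) <=
    A ^+ 2 * (L / Mn) + (4 * r ^+ 2 + A ^+ 2 * th).
  apply: (@sum_split R n mseq (fun k => Ex P (fun x => lc (stair r N) (Z k x) ^+ 2))
    (fun k => pr P [set y | r < `|Z k y|]) Mn L th (A ^+ 2) (4 * r ^+ 2)) => //.
  - move=> k; apply/andP; split; last exact: (nu1 P mZ N r0 k).
    by apply: (Ex_ge0 P) => x; exact: sqr_ge0.
  - by move=> k; exact: (nu2 P mZ N r0 k).
  - by move=> k _; exact: hp.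
  - by rewrite exprn_ge0// ltW.
  - by apply: addr_ge0; apply: mulr_ge0 => //; [exact: sqr_ge0|exact: sqr_ge0|exact: ltW].
move: hs; set S2 := \sum_(k < n) _ => hs.
have f1 : A ^+ 2 * (L / Mn) <= δ * a ^+ 2 / 4.
  have h := MnK; rewrite ler_pdivrMr ?mulr_gt0 ?exprn_gt0// in h.
  rewrite mulrA ler_pdivrMr//; lra.
have f2 : A ^+ 2 * th = δ * a ^+ 2 / 4.
  rewrite /th; field; rewrite ?mulf_neq0 ?expf_neq0 ?gt_eqF//.
have er : (r + r) ^+ 2 = 4 * (a ^+ 2 * t ^+ 2) by rewrite /r; ring.
have er2 : 4 * r ^+ 2 = 4 * (a ^+ 2 * t ^+ 2) by rewrite /r; ring.
have g1 : (r + r) ^+ 2 + S2 <= a ^+ 2 * (8 * t ^+ 2 + δ / 2).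
  rewrite er; rewrite er2 f2 in hs; lra.
have g2 : ((r + r) ^+ 2 + S2) / a ^+ 2 <= 8 * t ^+ 2 + δ / 2.
  by rewrite ler_pdivrMr ?exprn_gt0// mulrC.
have g3 : (r + r) / a = 2 * t by rewrite /r; field; rewrite gt_eqF.
have g4 : t ^+ 2 <= t by rewrite expr2 ler_piMl// ltW.
rewrite g3; lra.
Qed.
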